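(* Assume (A1)–(A2) below hold uniformly for all edges. Let $\boldsymbol u=(\rho,w)$ and $\hat{\boldsymbol u}=(\hat\rho,\hat w)$ be classical network solutions on $[0,T]$ with parameters and data $(\varepsilon,\gamma,h_\partial)$ and $(\hat\varepsilon,\hat\gamma,\hat h_\partial)$ respectively, and assume $(\hat\rho,\hat w)$ is Lipschitz on every edge. For each edge let $h^e(\tilde\rho,\tilde w)=\varepsilon^2\tilde w^2/2+P'(\tilde\rho)+gz^e$ and $m^e(\tilde\rho,\tilde w)=a^e\tilde\rho\tilde w$ (the co-state maps with the unperturbed parameter $\varepsilon$). Then at every time $$-\sum_{v\in\mathcal{V}}\sum_{e\in\mathcal{E}(v)}\big(h^e(\rho^e,w^e)-h^e(\hat\rho^e,\hat w^e)\big)(v)\,\big(m^e(\rho^e,w^e)-m^e(\hat\rho^e,\hat w^e)\big)(v)\,n^e(v)\le\hat C_\partial\big(|h_\partial-\hat h_\partial|+|\varepsilon^2-\hat\varepsilon^2|\big),$$ where $|h_\partial-\hat h_\partial|^2=\sum_{v\in\mathcal{V}_\partial}|h^v_\partial-\hat h^v_\partial|^2$ and $\hat C_\partial$ depends only on the bounds in (A1)–(A2) and the Lipschitz bounds of $(\hat\rho,\hat w)$.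
   Context: Let $(\mathcal{V},\mathcal{E})$ be a finite, connected, directed graph, each edge $e$ identified with $(0,\ell^e)$; $\mathcal{E}(v)$ the edges incident to $v$; $\mathcal{V}_0=\{v:|\mathcal{E}(v)|>1\}$, $\mathcal{V}_\partial=\{v:|\mathcal{E}(v)|=1\}$; $n^e(v)=1$ if $v$ is the end point ($x=\ell^e$) of $e$, $n^e(v)=-1$ if $v$ is its start point ($x=0$). Edge data: cross sections $a^e$, elevations $z^e$, friction coefficients $\gamma^e>0$; $g$ constant; $P:(0,\infty)\to\mathbb{R}$ smooth strictly convex. For parameter $\varepsilon\ge0$ the network problem reads on each edge $a^e\partial_\tau\rho^e+\partial_xm^e=0$, $\varepsilon^2\partial_\tau w^e+\partial_xh^e+\gamma^e|w^e|w^e=0$, $h^e=\varepsilon^2|w^e|^2/2+P'(\rho^e)+gz^e$, $m^e=a^e\rho^ew^e$; at $v\in\mathcal{V}_0$: $\sum_{e\in\mathcal{E}(v)}m^e(v)n^e(v)=0$ and $h^e(v)=h^v$ for all $e\in\mathcal{E}(v)$ (a common value); at $v\in\mathcal{V}_\partial$: $h^e(v)=h^v_\partial$. The perturbed solution uses $\hat\varepsilon$, $\hat\gamma^e$, $\hat h_\partial$ and its own enthalpy $\hat h^e=\hat\varepsilon^2|\hat w^e|^2/2+P'(\hat\rho^e)+gz^e$ in these conditions. (A1) (each edge): positive constants $\underline\rho\le\bar\rho$, $\bar w$, $\bar\varepsilon$ with $\rho P''(\rho)\ge4\bar\varepsilon^2\bar w^2$ for $\underline\rho\le\rho\le\bar\rho$;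 $0<\underline a\le a^e\le\bar a$; $|gz^e|\le\bar g\bar z$. (A2): $0\le\varepsilon,\hat\varepsilon\le\bar\varepsilon$, $0<\underline\gamma\le\gamma^e,\hat\gamma^e\le\bar\gamma$, solutions satisfy $\underline\rho\le\rho^e\le\bar\rho$, $-\bar w\le w^e\le\bar w$. A classical network solution on $[0,T]$: per edge $(\rho^e,w^e)\in C^1([0,T];L^2(0,\ell^e)^2)$ satisfying the bounds, $(h^e,m^e)\in C^0([0,T];H^1(0,\ell^e)^2)$, the edge equations holding weakly ($(a^e\partial_\tau\rho^e,q)+(\partial_xm^e,q)=0$, $(\varepsilon^2\partial_\tau w^e,r)-(h^e,\partial_xr)+(\gamma^e|w^e|w^e,r)=-[h^er]_0^{\ell^e}$ for all $q,r\in H^1(0,\ell^e)$), and the coupling and boundary conditions holding for all times. *)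

(* Defs.v *)
From HB Require Import structures.
From mathcomp Require Import all_boot all_order all_algebra.
From mathcomp Require Import all_classical all_reals all_analysis.
Set Implicit Arguments. Unset Strict Implicit. Unset Printing Implicit Defensive.
Import Order.TTheory GRing.Theory Num.Theory.
Import numFieldNormedType.Exports.
Local Open Scope classical_set_scope.
Local Open Scope ring_scope.

(* A finite directed graph: vertices V, edges E, edge e goes from src e
   (start point, x = 0) to tgt e (end point, x = ell e). *)
Definition incident (V E : finType) (src tgt : E -> V) (e : E) (v : V) : bool :=
  (src e == v) || (tgt e == v).

Definition adjacent (V E : finType) (src tgt : E -> V) : rel V :=
  fun u v => [exists e, ((src e == u) && (tgt e == v)) || ((src e == v) && (tgt e == u))].

Definition wf_graph (R : realType) (V E : finType) (src tgt : E -> V) (ell : E -> R) : Prop :=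
  (forall e, src e != tgt e) /\ (forall e, 0 < ell e) /\
  (forall u v, connect (adjacent src tgt) u v).

Definition degree (V E : finType) (src tgt : E -> V) (v : V) : nat :=
  #|[set e | incident src tgt e v]|.

Definition pos (R : realType) (V E : finType) (tgt : E -> V) (ell : E -> R) (e : E) (v : V) : R :=
  if tgt e == v then ell e else 0.

Definition nrm {R : realType} (V E : finType) (tgt : E -> V) (e : E) (v : V) : R :=
  if tgt e == v then 1 else -1.

Definition Iv (R : realType) (l : R) : set R := `[0, l].

Definition L2 (R : realType) (l : R) (f : R -> R) : Prop :=
  measurable_fun (Iv l) f /\
  (\int[@lebesgue_measure R]_(x in Iv l) ((f x) ^+ 2)%:E < +oo)%E.

Definition ip (R : realType) (l : R) (f g : R -> R) : R :=
  fine (\int[@lebesgue_measure R]_(x in Iv l) (f x * g x)%:E).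

Definition L2sq (R : realType) (l : R) (f : R -> R) : R := ip l f f.

(* f is (the continuous representative of) an H^1(0,l) function with weak
   derivative df *)
Definition isH1 (R : realType) (l : R) (f df : R -> R) : Prop :=
  L2 l f /\ L2 l df /\
  forall x, 0 <= x <= l -> f x = f 0 + ip x df (fun _ => 1).

Definition C1L2 (R : realType) (T l : R) (u du : R -> R -> R) : Prop :=
  (forall t, 0 <= t <= T -> L2 l (u t) /\ L2 l (du t)) /\
  (forall t, 0 <= t <= T -> forall eps : R, 0 < eps -> exists2 del : R, 0 < del &
     forall s, 0 <= s <= T -> `|s - t| < del ->
       L2sq l (fun x => u s x - u t x - (s - t) * du t x) <= eps * (s - t) ^+ 2) /\
  (forall t, 0 <= t <= T -> forall eps : R, 0 < eps -> exists2 del : R, 0 < del &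
     forall s, 0 <= s <= T -> `|s - t| < del ->
       L2sq l (fun x => du s x - du t x) <= eps).

Definition C0H1 (R : realType) (T l : R) (f df : R -> R -> R) : Prop :=
  (forall t, 0 <= t <= T -> isH1 l (f t) (df t)) /\
  (forall t, 0 <= t <= T -> forall eps : R, 0 < eps -> exists2 del : R, 0 < del &
     forall s, 0 <= s <= T -> `|s - t| < del ->
       L2sq l (fun x => f s x - f t x) + L2sq l (fun x => df s x - df t x) <= eps).

(* DP n is the n-th derivative of P on (0,oo); P smooth and strictly convex *)
Definition smooth_strictly_convex (R : realType) (P : R -> R) (DP : nat -> R -> R) : Prop :=
  (forall x, 0 < x -> DP 0%N x = P x) /\
  (forall (n : nat) (x : R), 0 < x -> is_derive x 1 (DP n) (DP n.+1 x)) /\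
  (forall x y t : R, 0 < x -> 0 < y -> x != y -> 0 < t < 1 ->
     P (t * x + (1 - t) * y) < t * P x + (1 - t) * P y).

Definition hmap (R : realType) (DP : nat -> R -> R) (g eps zx r ww : R) : R :=
  eps ^+ 2 * ww ^+ 2 / 2 + DP 1%N r + g * zx.

Definition mmap (R : realType) (ax r ww : R) : R := ax * r * ww.

Definition network_solution (R : realType) (V E : finType) (src tgt : E -> V)
  (ell : E -> R) (DP : nat -> R -> R) (g : R)
  (a z : E -> R -> R) (gam : E -> R) (eps : R) (hb : V -> R)
  (rho_lo rho_hi wbar T : R) (rho w : E -> R -> R -> R) : Prop :=
  let h := fun e t x => hmap DP g eps (z e x) (rho e t x) (w e t x) in
  let m := fun e t x => mmap (a e x) (rho e t x) (w e t x) in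
  exists drho dw dh dm : E -> R -> R -> R,
  (forall e,
     (forall t x, 0 <= t <= T -> 0 <= x <= ell e ->
        rho_lo <= rho e t x <= rho_hi /\ - wbar <= w e t x <= wbar) /\
     C1L2 T (ell e) (rho e) (drho e) /\ C1L2 T (ell e) (w e) (dw e) /\
     C0H1 T (ell e) (h e) (dh e) /\ C0H1 T (ell e) (m e) (dm e) /\
     (forall t, 0 <= t <= T -> forall q dq, isH1 (ell e) q dq ->
        ip (ell e) (fun x => a e x * drho e t x) q + ip (ell e) (dm e t) q = 0) /\
     (forall t, 0 <= t <= T -> forall r dr, isH1 (ell e) r dr ->
        eps ^+ 2 * ip (ell e) (dw e t) r - ip (ell e) (h e t) dr
        + ip (ell e) (fun x => gam e * `|w e t x| * w e t x) r
        = - (h e t (ell e) * r (ell e) - h e t 0 * r 0))) /\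
  (forall t, 0 <= t <= T -> forall v, (1 < degree src tgt v)%N ->
     \sum_(e | incident src tgt e v) m e t (pos tgt ell e v) * nrm tgt e v = 0 /\
     exists hv, forall e, incident src tgt e v -> h e t (pos tgt ell e v) = hv) /\
  (forall t, 0 <= t <= T -> forall v, degree src tgt v = 1%N ->
     forall e, incident src tgt e v -> h e t (pos tgt ell e v) = hb v).

(* Main.v *)
Require Import Defs.
From HB Require Import structures.
From mathcomp Require Import all_boot all_order all_algebra.
From mathcomp Require Import all_classical all_reals all_analysis.
Import Order.TTheory GRing.Theory Num.Theory.
Local Open Scope ring_scope.
From mathcomp Require Import ring lra.


Lemma sqrt_bound (R : realType) (V : finType) (P : pred V) (f : V -> R) v :
  P v -> `|f v| <= Num.sqrt (\sum_(u | P u) f u ^+ 2).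
Proof.
move=> Pv; rewrite -sqrtr_sqr ler_wsqrtr // (bigD1 v) //= lerDl.
by apply: sumr_ge0 => u _; exact: sqr_ge0.
Qed.

Lemma sum_bound (R : realType) (E : finType) (P : pred E) (F : E -> R) c :
  0 <= c -> (forall e, P e -> `|F e| <= c) -> `|\sum_(e | P e) F e| <= #|E|%:R * c.
Proof.
move=> c0 H; apply: (le_trans (ler_norm_sum _ _ _)).
apply: (@le_trans _ _ (\sum_(e | P e) c)); first exact: ler_sum.
rewrite big_mkcond /=.
apply: (@le_trans _ _ (\sum_(e in E) c)); last by rewrite sumr_const mulr_natl.
by apply: ler_sum => e _; case: (P e).
Qed.

Lemma sum_constV (R : realType) (V : finType) (c : R) : \sum_(v : V) c = #|V|%:R * c.
Proof. by rewrite sumr_const mulr_natl. Qed.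

Lemma negle (R : realType) (x : R) : - x <= `|x|.
Proof. by rewrite -normrN ler_norm. Qed.

Lemma vertex_bound (R : realType) (E : finType) (P : pred E)
  (H1 H2 H2h M1 M2 W n : E -> R) (K S B Q : R) :
  0 <= B -> 0 <= Q -> 0 <= S ->
  (forall e, P e -> `|M1 e - M2 e| <= B) ->
  (forall e, P e -> `|n e| = 1) ->
  (forall e, P e -> `|K * (W e ^+ 2 / 2)| <= `|K| * Q) ->
  (forall e, P e -> H2 e = H2h e + K * (W e ^+ 2 / 2)) ->
  ((\sum_(e | P e) M1 e * n e = 0 /\ \sum_(e | P e) M2 e * n e = 0 /\
     exists hv hvh, forall e, P e -> H1 e = hv /\ H2h e = hvh)
   \/ (forall e, P e -> `|H1 e - H2h e| <= S)) ->
  - \sum_(e | P e) (H1 e - H2 e) * (M1 e - M2 e) * n e <= #|E|%:R * (B * (S + Q * `|K|)).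
Proof.
move=> B0 Q0 S0 HM Hn HW HH [[Hk1 [Hk2 [hv [hvh Hh]]]] | Hb].
- have -> : \sum_(e | P e) (H1 e - H2 e) * (M1 e - M2 e) * n e =
     (hv - hvh) * \sum_(e | P e) M1 e * n e - (hv - hvh) * \sum_(e | P e) M2 e * n e
     - \sum_(e | P e) K * (W e ^+ 2 / 2) * (M1 e - M2 e) * n e.
    rewrite !mulr_sumr -!sumrB; apply: eq_bigr => e Pe.
    rewrite HH //; case: (Hh e Pe) => -> ->; ring.
  rewrite Hk1 Hk2 !mulr0 subrr sub0r opprK.
  apply: (le_trans (ler_norm _)).
  apply: sum_bound; first by apply: mulr_ge0 => //; apply: addr_ge0 => //; apply: mulr_ge0.
  move=> e Pe; rewrite normrM (Hn e Pe) mulr1 normrM.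
  apply: (@le_trans _ _ ((`|K| * Q) * B)).
    by apply: ler_pM; [exact: normr_ge0|exact: normr_ge0|exact: HW|exact: HM].
  rewrite mulrC ler_wpM2l //; lra.
- apply: le_trans; first exact: negle.
  apply: sum_bound; first by apply: mulr_ge0 => //; apply: addr_ge0 => //; apply: mulr_ge0.
  move=> e Pe; rewrite normrM (Hn e Pe) mulr1 normrM mulrC.
  apply: ler_pM; [exact: normr_ge0|exact: normr_ge0|exact: HM|].
  rewrite HH // (_ : H1 e - (H2h e + K * (W e ^+ 2 / 2)) = (H1 e - H2h e) - K * (W e ^+ 2 / 2)); last by ring.
  apply: (le_trans (ler_normB _ _)).
  by apply: lerD; [exact: Hb|rewrite [Q * _]mulrC; exact: HW].
Qed.

Theorem lemma5p1 (R : realType) (V E : finType) (src tgt : E -> V) (ell : E -> R)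
  (Hgraph : wf_graph src tgt ell)
  (rho_lo rho_hi wbar epsbar a_lo a_hi gzbar gam_lo gam_hi Lip : R)
  (Hpos : (0 < rho_lo <= rho_hi) /\ 0 < wbar /\ 0 < epsbar /\ (0 < a_lo <= a_hi) /\
              0 <= gzbar /\ (0 < gam_lo <= gam_hi) /\ 0 <= Lip) :
  exists C : R, forall (P : R -> R) (DP : nat -> R -> R) (g : R),
  smooth_strictly_convex P DP ->
  (* (A1) *)
  (forall r, rho_lo <= r <= rho_hi -> r * DP 2%N r >= 4 * epsbar ^+ 2 * wbar ^+ 2) ->
  forall (a z : E -> R -> R) (gam gamh : E -> R) (eps epsh : R) (hb hbh : V -> R)
         (T : R) (rho w rhoh wh : E -> R -> R -> R),
  (forall e, measurable_fun (Iv (ell e)) (a e) /\ measurable_fun (Iv (ell e)) (z e)) ->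
  (forall e x, 0 <= x <= ell e -> a_lo <= a e x <= a_hi /\ `|g * z e x| <= gzbar) ->
  (* (A2) *)
  0 <= eps <= epsbar -> 0 <= epsh <= epsbar ->
  (forall e, gam_lo <= gam e <= gam_hi /\ gam_lo <= gamh e <= gam_hi) ->
  0 < T ->
  network_solution src tgt ell DP g a z gam eps hb rho_lo rho_hi wbar T rho w ->
  network_solution src tgt ell DP g a z gamh epsh hbh rho_lo rho_hi wbar T rhoh wh ->
  (* (rhoh, wh) Lipschitz on every edge with constant Lip *)
  (forall e t s x y, 0 <= t <= T -> 0 <= s <= T -> 0 <= x <= ell e -> 0 <= y <= ell e ->
     `|rhoh e t x - rhoh e s y| <= Lip * (`|t - s| + `|x - y|) /\
     `|wh e t x - wh e s y| <= Lip * (`|t - s| + `|x - y|)) ->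
  forall t, 0 <= t <= T ->
  - (\sum_(v : V) \sum_(e | incident src tgt e v)
       (hmap DP g eps (z e (pos tgt ell e v)) (rho e t (pos tgt ell e v)) (w e t (pos tgt ell e v))
        - hmap DP g eps (z e (pos tgt ell e v)) (rhoh e t (pos tgt ell e v)) (wh e t (pos tgt ell e v)))
     * (mmap (a e (pos tgt ell e v)) (rho e t (pos tgt ell e v)) (w e t (pos tgt ell e v))
        - mmap (a e (pos tgt ell e v)) (rhoh e t (pos tgt ell e v)) (wh e t (pos tgt ell e v)))
     * nrm tgt e v)
  <= C * (Num.sqrt (\sum_(v : V | degree src tgt v == 1%N) (hb v - hbh v) ^+ 2)
          + `|eps ^+ 2 - epsh ^+ 2|).
Proof.
Proof.
move: Hpos => [/andP[rlo0 rlohi] [wb0 [eb0 [/andP[alo0 alohi] [gz0 [/andP[glo0 glohi] L0]]]]]].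
case: Hgraph => _ [Hell _].
set B := 2 * a_hi * rho_hi * wbar.
set Q := wbar ^+ 2 / 2.
have B0 : 0 <= B by rewrite /B; apply: mulr_ge0; [apply: mulr_ge0; [apply: mulr_ge0|]|]; lra.
have Q0 : 0 <= Q by rewrite /Q; apply: divr_ge0 => //; exact: sqr_ge0.
have HBdef : B = 2 * a_hi * rho_hi * wbar by [].
have HQdef : Q = wbar ^+ 2 / 2 by [].
clearbody B Q.
exists (#|V|%:R * (#|E|%:R * (B * (1 + Q)))).
move=> P DP g Hconv HA1 a z gam gamh eps epsh hb hbh T rho w rhoh wh Hmeas Hab Heps Hepsh Hgam HT
  Hsol Hsolh Hlip t Ht.
case: Hsol => drho [dw [dh [dm [Hed [Hint Hbd]]]]].
case: Hsolh => drhoh [dwh [dhh [dmh [Hedh [Hinth Hbdh]]]]].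
set K := eps ^+ 2 - epsh ^+ 2.
set S := Num.sqrt _.
have S0 : 0 <= S by exact: sqrtr_ge0.
have Hx : forall e v, 0 <= pos tgt ell e v <= ell e.
  move=> e v; rewrite /pos; case: ifP => _; have := Hell e; lra.
have Hv : forall v, - (\sum_(e | incident src tgt e v)
       (hmap DP g eps (z e (pos tgt ell e v)) (rho e t (pos tgt ell e v)) (w e t (pos tgt ell e v))
        - hmap DP g eps (z e (pos tgt ell e v)) (rhoh e t (pos tgt ell e v)) (wh e t (pos tgt ell e v)))
     * (mmap (a e (pos tgt ell e v)) (rho e t (pos tgt ell e v)) (w e t (pos tgt ell e v))
        - mmap (a e (pos tgt ell e v)) (rhoh e t (pos tgt ell e v)) (wh e t (pos tgt ell e v)))
     * nrm tgt e v) <= #|E|%:R * (B * (S + Q * `|K|)).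
  move=> v.
  apply: (@vertex_bound R E (fun e => incident src tgt e v)
    (fun e => hmap DP g eps (z e (pos tgt ell e v)) (rho e t (pos tgt ell e v)) (w e t (pos tgt ell e v)))
    (fun e => hmap DP g eps (z e (pos tgt ell e v)) (rhoh e t (pos tgt ell e v)) (wh e t (pos tgt ell e v)))
    (fun e => hmap DP g epsh (z e (pos tgt ell e v)) (rhoh e t (pos tgt ell e v)) (wh e t (pos tgt ell e v)))
    (fun e => mmap (a e (pos tgt ell e v)) (rho e t (pos tgt ell e v)) (w e t (pos tgt ell e v)))
    (fun e => mmap (a e (pos tgt ell e v)) (rhoh e t (pos tgt ell e v)) (wh e t (pos tgt ell e v)))
    (fun e => wh e t (pos tgt ell e v)) (fun e => nrm tgt e v) K S B Q B0 Q0 S0).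
  - move=> e _ /=.
    have [[Hb _] _] := (Hed e, Hedh e).
    have [Hbh _] := Hedh e.
    have [/andP[r1 r2] /andP[w1 w2]] := Hb t _ Ht (Hx e v).
    have [/andP[r1' r2'] /andP[w1' w2']] := Hbh t _ Ht (Hx e v).
    have [/andP[a1 a2] _] := Hab e _ (Hx e v).
    rewrite /mmap HBdef.
    have P3 : forall r ww, rho_lo <= r <= rho_hi -> - wbar <= ww <= wbar ->
        `|a e (pos tgt ell e v) * r * ww| <= a_hi * rho_hi * wbar.
      move=> r ww /andP[r1'' r2''] Hww; rewrite !normrM.
      apply: ler_pM; [by apply: mulr_ge0; exact: normr_ge0|exact: normr_ge0| |by rewrite ler_norml].
      apply: ler_pM; [exact: normr_ge0|exact: normr_ge0| |].
        by rewrite ger0_norm; lra.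
      by rewrite ger0_norm; lra.
    apply: (le_trans (ler_normB _ _)).
    have := P3 _ _ (introT andP (conj r1 r2)) (introT andP (conj w1 w2)).
    have := P3 _ _ (introT andP (conj r1' r2')) (introT andP (conj w1' w2')).
    lra.
  - by move=> e _ /=; rewrite /nrm; case: ifP => _; rewrite ?normrN normr1.
  - move=> e _ /=.
    have [Hbh _] := Hedh e.
    have [_ /andP[w1' w2']] := Hbh t _ Ht (Hx e v).
    rewrite normrM ler_wpM2l // ger0_norm; last by apply: divr_ge0 => //; exact: sqr_ge0.
    rewrite HQdef; have : wh e t (pos tgt ell e v) ^+ 2 <= wbar ^+ 2 by nra.
    lra.
  - by move=> e _ /=; rewrite /hmap /K; ring.
  case: (ltnP 1 (degree src tgt v)) => Hdeg.
  + left.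
    have [Hk [hv Hhv]] := Hint t Ht v Hdeg.
    have [Hkh [hvh Hhvh]] := Hinth t Ht v Hdeg.
    split; first exact: Hk.
    split; first exact: Hkh.
    by exists hv, hvh => e He; split; [exact: Hhv|exact: Hhvh].
  + right => e He /=.
    have Hd1 : degree src tgt v = 1%N.
      apply/eqP; rewrite eqn_leq Hdeg /=.
      by apply/card_gt0P; exists e; rewrite inE.
    rewrite (Hbd t Ht v Hd1 e He) (Hbdh t Ht v Hd1 e He).
    by apply: (@sqrt_bound R V (fun u => degree src tgt u == 1%N) (fun u => hb u - hbh u)); rewrite Hd1.
rewrite -sumrN.
apply: (@le_trans _ _ (\sum_(v : V) #|E|%:R * (B * (S + Q * `|K|)))).
  by apply: ler_sum => v _; exact: Hv.
rewrite sum_constV.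
have NV : 0 <= #|V|%:R :> R by exact: ler0n.
have NE : 0 <= #|E|%:R :> R by exact: ler0n.
have K0 : 0 <= `|K| by exact: normr_ge0.
rewrite -!mulrA; apply: ler_wpM2l => //; apply: ler_wpM2l => //; apply: ler_wpM2l => //.
nra.
Qed.
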